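(* For all finite strings $s,s'$ over the alphabet $\{\blacktriangledown,\blacktriangle,\triangleleft,\triangleright\}$, if $s$ is a subword of $s'$, then $b(s)\le b(s')$.
   Context: Consider finite strings over the alphabet $\{\blacktriangledown,\blacktriangle,\triangleleft,\triangleright\}$. The allowed replacements (each replaces a contiguous substring equal to its left-hand side by its right-hand side) are: $\triangleleft\blacktriangle\to\triangleleft$, $\triangleleft\blacktriangledown\to\triangleleft$, $\blacktriangle\triangleright\to\triangleright$, $\blacktriangledown\triangleright\to\triangleright$, $\blacktriangle\blacktriangle\to\blacktriangle$, $\blacktriangledown\blacktriangledown\to\blacktriangledown$, $\blacktriangledown\blacktriangle\to\blacktriangle\blacktriangledown$, $\blacktriangle\blacktriangledown\to\blacktriangledown\blacktriangle$, and $\triangleleft\triangleright\to\emptyset$ (the empty string). A rewriting $s\Rightarrow t$ is the simultaneous application to $s$ of several allowed replacements whose left-hand sides occupy pairwise disjoint contiguous substrings of $s$, producing $t$. A rewriting sequence of length $\ell$ from $s$ is a sequence $s=s_0\Rightarrow s_1\Rightarrow\cdots\Rightarrow s_\ell=\emptyset$. $b(s)$ denotes the length of a shortest rewriting sequence from $s$ (taken as $+\infty$ if none exists). A string $s$ is a subword of $s'$ if $s$ can be obtained from $s'$ by deleting some occurrences of the symbols $\blacktriangledown,\blacktriangle$ without changing the order of the remaining symbols. *)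

(* Defs.v *)
From Stdlib Require Import List Arith ClassicalEpsilon.
Import ListNotations.

(* The alphabet: Dn = ▼, Up = ▲, L = ◁, R = ▷ *)
Inductive sym : Type := Dn | Up | L | R.

Definition word := list sym.

Inductive rule : word -> word -> Prop :=
  | r_LUp  : rule [L; Up] [L]
  | r_LDn  : rule [L; Dn] [L]
  | r_UpR  : rule [Up; R] [R]
  | r_DnR  : rule [Dn; R] [R]
  | r_UpUp : rule [Up; Up] [Up]
  | r_DnDn : rule [Dn; Dn] [Dn]
  | r_DnUp : rule [Dn; Up] [Up; Dn]
  | r_UpDn : rule [Up; Dn] [Dn; Up]
  | r_LR   : rule [L; R] [].

Inductive piece : word * word -> Prop :=
  | p_keep x : piece ([x], [x])
  | p_rule l r : rule l r -> piece (l, r).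

(* s => t : simultaneous application of several (at least one) replacements
   with pairwise disjoint contiguous left-hand sides. *)
Definition step (s t : word) : Prop :=
  exists ps : list (word * word),
    Forall piece ps /\
    Exists (fun p => rule (fst p) (snd p)) ps /\
    s = concat (map fst ps) /\ t = concat (map snd ps).

Inductive rseq : word -> nat -> Prop :=
  | rseq0 : rseq [] 0
  | rseqS s t n : step s t -> rseq t n -> rseq s (S n).

(* b(s) : length of a shortest rewriting sequence; None = +infinity *)
Definition b (s : word) : option nat :=
  match excluded_middle_informative (exists n, rseq s n) with
  | left H => Some (epsilon (inhabits 0)
                      (fun n => rseq s n /\ forall m, rseq s m -> n <= m))
  | right _ => None
  end.

Definition le_inf (x y : option nat) : Prop :=
  match x, y with
  | _, None => True
  | None, Some _ => False
  | Some a, Some c => a <= c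
  end.

Inductive subword : word -> word -> Prop :=
  | sw_nil : subword [] []
  | sw_keep x s s' : subword s s' -> subword (x :: s) (x :: s')
  | sw_delDn s s' : subword s s' -> subword s (Dn :: s')
  | sw_delUp s s' : subword s s' -> subword s (Up :: s').

(* Main.v *)
Require Import Defs.
From Stdlib Require Import List Arith Lia ClassicalEpsilon.
Import ListNotations.

Lemma sw_refl l : subword l l.
Proof. induction l; constructor; auto. Qed.

Lemma sw_nil_r s : subword s [] -> s = [].
Proof. intro H; inversion H; auto. Qed.

Lemma sw_app a b c d : subword a b -> subword c d -> subword (a ++ c) (b ++ d).
Proof. intros H1 H2; induction H1; simpl; try constructor; auto. Qed.

Lemma sw_split a : forall b s, subword s (a ++ b) ->
  exists s1 s2, s = s1 ++ s2 /\ subword s1 a /\ subword s2 b.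
Proof.
  induction a as [|x a IH]; simpl; intros b s H.
  - exists [], s; repeat split; auto; constructor.
  - inversion H as [|? ? ? H3|? ? H3|? ? H3]; subst.
    + destruct (IH _ _ H3) as [s1 [s2 [E [A B]]]]. subst.
      exists (x :: s1), s2; repeat split; auto; constructor; auto.
    + destruct (IH _ _ H3) as [s1 [s2 [E [A B]]]]. subst.
      exists s1, s2; repeat split; auto; constructor; auto.
    + destruct (IH _ _ H3) as [s1 [s2 [E [A B]]]]. subst.
      exists s1, s2; repeat split; auto; constructor; auto.
Qed.

Ltac inv H := inversion H; subst; clear H.

Lemma piece_sim l r l0 : piece (l, r) -> subword l0 l ->
  (exists r0, rule l0 r0 /\ subword r0 r) \/ subword l0 r.
Proof.
  intros P H. inv P.
  - right; auto.
  - match goal with HR : rule _ _ |- _ => inv HR end;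
    repeat match goal with
      | H : subword _ (_ :: _) |- _ => inv H
      | H : subword _ [] |- _ => inv H
      end;
    try (left; eexists; split; [constructor | apply sw_refl]);
    right; repeat constructor.
Qed.

Definition keeps (l : word) : list (word * word) := map (fun x => ([x], [x])) l.

Lemma keeps_ok l : Forall piece (keeps l) /\ concat (map fst (keeps l)) = l
  /\ concat (map snd (keeps l)) = l.
Proof.
  induction l as [|x l IH]; simpl; [repeat split; auto|].
  destruct IH as [A [B C]]; rewrite B, C; repeat split; auto.
  constructor; auto; constructor.
Qed.

Lemma list_sim ps : Forall piece ps -> forall s, subword s (concat (map fst ps)) ->
  exists ps0, Forall piece ps0 /\ s = concat (map fst ps0) /\
    subword (concat (map snd ps0)) (concat (map snd ps)) /\
    (Exists (fun p => rule (fst p) (snd p)) ps0 \/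
     concat (map fst ps0) = concat (map snd ps0)).
Proof.
  induction 1 as [|[l r] ps P Fs IH]; simpl; intros s H.
  - apply sw_nil_r in H; subst. exists []; simpl; repeat split; auto; constructor.
  - destruct (sw_split _ _ _ H) as [s1 [s2 [E [A B]]]]; subst.
    destruct (IH _ B) as [ps0 [F0 [E0 [S0 D0]]]]; subst.
    destruct (piece_sim _ _ _ P A) as [[r0 [R0 S1]] | S1].
    + exists ((s1, r0) :: ps0); simpl; repeat split.
      * constructor; auto; apply p_rule; auto.
      * apply sw_app; auto.
      * left; constructor; auto.
    + destruct (keeps_ok s1) as [K1 [K2 K3]].
      exists (keeps s1 ++ ps0); rewrite !map_app, !concat_app, K2, K3; repeat split.
      * apply Forall_app; auto.
      * apply sw_app; auto.
      * destruct D0 as [D0|D0]; [left; apply Exists_app; auto | right; rewrite D0; auto].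
Qed.

Lemma step_sim s' t' s : step s' t' -> subword s s' ->
  exists t, subword t t' /\ (step s t \/ s = t).
Proof.
  intros [ps [F [Ex [E1 E2]]]] H; subst.
  destruct (list_sim ps F s H) as [ps0 [F0 [E0 [S0 D0]]]].
  exists (concat (map snd ps0)); split; auto.
  destruct D0 as [D0|D0].
  - left; exists ps0; repeat split; auto.
  - right; congruence.
Qed.

Lemma rseq_sim s' n : rseq s' n -> forall s, subword s s' -> exists m, m <= n /\ rseq s m.
Proof.
  induction 1 as [|s' t' n St Rs IH]; intros s H.
  - apply sw_nil_r in H; subst; exists 0; split; auto; constructor.
  - destruct (step_sim _ _ _ St H) as [t [Ht [Hs|Hs]]];
    destruct (IH _ Ht) as [m [Hm Rm]].
    + exists (S m); split; [lia| econstructor; eauto].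
    + subst; exists m; split; [lia|auto].
Qed.

Theorem theorem4 (s s' : word) : subword s s' -> le_inf (b s) (b s').
Proof.
  intro H. unfold b.
  destruct (excluded_middle_informative (exists n, rseq s' n)) as [E'|E']; [|destruct (excluded_middle_informative _); simpl; auto].
  set (P' := fun n => rseq s' n /\ forall m, rseq s' m -> n <= m).
  assert (Ex' : exists n, P' n).
  { destruct E' as [n0 Hn0].
    induction n0 as [n0 IHn] using lt_wf_ind.
    destruct (classic (exists m, rseq s' m /\ m < n0)) as [[m [Hm Hlt]]|NE].
    - exact (IHn m Hlt Hm).
    - exists n0; split; auto; intros m Hm.
      destruct (le_lt_dec n0 m); auto; exfalso; apply NE; eauto. }
  pose proof (epsilon_spec (inhabits 0) P' Ex') as [R1 _].
  fold P'.
  destruct (rseq_sim _ _ R1 s H) as [m [Hm Rm]].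
  destruct (excluded_middle_informative (exists n, rseq s n)) as [E|E]; [| exfalso; eauto].
  set (P := fun n => rseq s n /\ forall m, rseq s m -> n <= m).
  assert (Ex : exists n, P n).
  { destruct E as [n0 Hn0].
    induction n0 as [n0 IHn] using lt_wf_ind.
    destruct (classic (exists m, rseq s m /\ m < n0)) as [[m' [Hm' Hlt]]|NE].
    - exact (IHn m' Hlt Hm').
    - exists n0; split; auto; intros m' Hm'.
      destruct (le_lt_dec n0 m'); auto; exfalso; apply NE; eauto. }
  pose proof (epsilon_spec (inhabits 0) P Ex) as [_ R2].
  simpl. fold P. specialize (R2 _ Rm). lia.
Qed.
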